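(* Let $G$ and $H$ be finite simple graphs, neither complete, and not both equal to a disjoint union of two complete graphs. Then $d_{G\diamond H}((g,h),(g',h'))=3$ if and only if at least one of the following holds: (1) $N_G[g]=N_G[g']$, $d_H(h,h')\ge 3$, and ($N_G[g]=V(G)$ or $\{h,h'\}$ is a $\gamma_H$-pair); (2) $N_H[h]=N_H[h']$, $d_G(g,g')\ge 3$, and ($N_H[h]=V(H)$ or $\{g,g'\}$ is a $\gamma_G$-pair).
   Context: The modular product $G\diamond H$ has vertex set $V(G)\times V(H)$; distinct vertices $(g,h)$ and $(g',h')$ are adjacent iff ($g=g'$ and $hh'\in E(H)$), or ($gg'\in E(G)$ and $h=h'$), or ($gg'\in E(G)$ and $hh'\in E(H)$), or ($g\neq g'$, $h\neq h'$, $gg'\notin E(G)$ and $hh'\notin E(H)$). $N_X[v]$ is the closed neighborhood; distances may be $\infty$ (written $\ge 3$ includes $\infty$). A $\gamma_G$-pair is a set $\{g,g'\}$ of two distinct vertices of $G$ such that $N_G[g]\cap N_G[g']=\emptyset$ and $N_G[g]\cup N_G[g']=V(G)$. *)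

(* Defs.v *)
From mathcomp Require Import all_boot.
Set Implicit Arguments. Unset Strict Implicit. Unset Printing Implicit Defensive.

Definition simple_graph (T : finType) (e : rel T) : Prop :=
  symmetric e /\ irreflexive e.

Definition cnbhd (T : finType) (e : rel T) (v : T) : {set T} :=
  [set x | (x == v) || e v x].

Definition complete (T : finType) (e : rel T) : Prop :=
  forall x y : T, x != y -> e x y.

Definition two_cliques (T : finType) (e : rel T) : Prop :=
  exists A : {set T}, A != set0 /\ ~: A != set0 /\
    forall x y : T, x != y -> (e x y <-> ((x \in A) = (y \in A))).

Definition walk (T : finType) (e : rel T) (x y : T) (n : nat) : Prop :=
  exists p : seq T, size p = n /\ path e x p /\ last x p = y.

(* d(x,y) = k  (distance is the least length of a walk; infinite if none) *)
Definition dist_eq (T : finType) (e : rel T) (x y : T) (k : nat) : Prop :=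
  walk e x y k /\ forall n, n < k -> ~ walk e x y n.

(* d(x,y) >= k  (includes d = infinity) *)
Definition dist_ge (T : finType) (e : rel T) (x y : T) (k : nat) : Prop :=
  forall n, n < k -> ~ walk e x y n.

Definition gamma_pair (T : finType) (e : rel T) (g g' : T) : Prop :=
  g != g' /\ cnbhd e g :&: cnbhd e g' = set0 /\ cnbhd e g :|: cnbhd e g' = setT.

Definition modprod (T1 T2 : finType) (e1 : rel T1) (e2 : rel T2) : rel (T1 * T2) :=
  fun u v =>
    let: (g, h) := u in let: (g', h') := v in
    (u != v) &&
    [|| (g == g') && e2 h h',
        e1 g g' && (h == h'),
        e1 g g' && e2 h h'
      | [&& g != g', h != h', ~~ e1 g g' & ~~ e2 h h'] ].

(* Main.v *)
Require Import Defs.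
From mathcomp Require Import all_boot.
From Stdlib Require Import Classical.

Set Implicit Arguments. Unset Strict Implicit. Unset Printing Implicit Defensive.

Section Gen.

Definition sn (T : finType) (e : rel T) a b := (a == b) || e a b.

Lemma sn_refl (T : finType) (e : rel T) a : sn e a a.
Proof. by rewrite /sn eqxx. Qed.

Lemma sn_sym (T : finType) (e : rel T) : symmetric e -> forall a b, sn e a b = sn e b a.
Proof. by move=> se a b; rewrite /sn eq_sym se. Qed.

Lemma in_cnbhd (T : finType) (e : rel T) v x : (x \in cnbhd e v) = sn e v x.
Proof. by rewrite inE /sn eq_sym. Qed.

Definition RR (T1 T2 : finType) (e1 : rel T1) (e2 : rel T2) : rel (T1 * T2) :=
  fun u v => (u != v) && (sn e1 u.1 v.1 == sn e2 u.2 v.2).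

Lemma modprodE (T1 T2 : finType) (e1 : rel T1) (e2 : rel T2) :
  simple_graph e1 -> simple_graph e2 -> modprod e1 e2 =2 RR e1 e2.
Proof.
move=> [_ i1] [_ i2] [a b] [c d]; rewrite /modprod /RR /= /sn xpair_eqE.
case: (eqVneq a c) => [<-|ac]; case: (eqVneq b d) => [<-|bd] /=;
  rewrite ?i1 ?i2 /=; by case: (e1 a c); case: (e2 b d).
Qed.

Lemma RI (T1 T2 : finType) (e1 : rel T1) (e2 : rel T2) a b c d :
  (a != c \/ b != d) -> sn e1 a c = sn e2 b d -> RR e1 e2 (a, b) (c, d).
Proof.
move=> H E; rewrite /RR /= E eqxx andbT xpair_eqE negb_and.
by case: H => ->; rewrite ?orbT.
Qed.

Lemma walk_eqrel (T : finType) (e e' : rel T) x y n :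
  e =2 e' -> walk e x y n -> walk e' x y n.
Proof.
move=> E [p [Hs [Hp Hl]]]; exists p; split=> //; split=> //.
by rewrite -(eq_path E).
Qed.

Lemma walk0 (T : finType) (e : rel T) x y : walk e x y 0 <-> x = y.
Proof.
split; last by move=> ->; exists [::].
case=> [[|a p]] [Hs [_ Hl]] //.
Qed.

Lemma walk1 (T : finType) (e : rel T) x y : walk e x y 1 <-> e x y.
Proof.
split; last by move=> H; exists [:: y]; rewrite /= H.
case=> [[|a [|b p]]] [Hs [Hp Hl]] //=.
by move: Hp Hl => /= /andP[H _] <-.
Qed.

Lemma walk2 (T : finType) (e : rel T) x y :
  walk e x y 2 <-> exists z, e x z /\ e z y.
Proof.
split; last by move=> [z [H1 H2]]; exists [:: z; y]; rewrite /= H1 H2.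
case=> [[|a [|b [|c p]]]] [Hs [Hp Hl]] //=.
move: Hp Hl => /= /and3P[H1 H2 _] <-; by exists a.
Qed.

Lemma walk3 (T : finType) (e : rel T) x a b y :
  e x a -> e a b -> e b y -> walk e x y 3.
Proof. by move=> H1 H2 H3; exists [:: a; b; y]; rewrite /= H1 H2 H3. Qed.

Lemma dist_ge3 (T : finType) (e : rel T) x y :
  dist_ge e x y 3 <-> [/\ x <> y, ~ e x y & forall z, e x z -> ~ e z y].
Proof.
split.
- move=> H; split.
  + by move=> E; apply: (H 0) => //; apply/walk0.
  + by move=> E; apply: (H 1) => //; apply/walk1.
  + by move=> z H1 H2; apply: (H 2) => //; apply/walk2; exists z.
- move=> [H0 H1 H2] [|[|[|n]]] Hn.
  + by move/walk0.
  + by move/walk1.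
  + by move/walk2 => [z [A B]]; apply: (H2 z).
  + by [].
Qed.

Lemma swapRR (T1 T2 : finType) (e1 : rel T1) (e2 : rel T2) u v :
  RR e2 e1 (u.2, u.1) (v.2, v.1) = RR e1 e2 u v.
Proof.
case: u => [a b]; case: v => [c d]; rewrite /RR /= !xpair_eqE.
by rewrite [(b == d) && _]andbC [sn e2 _ _ == _]eq_sym.
Qed.

Lemma walk_swap (T1 T2 : finType) (e1 : rel T1) (e2 : rel T2) g h g' h' n :
  walk (RR e1 e2) (g, h) (g', h') n -> walk (RR e2 e1) (h, g) (h', g') n.
Proof.
move=> [p [Hs [Hp Hl]]].
exists (map (fun u => (u.2, u.1)) p); split; first by rewrite size_map.
split.
- have -> : (h, g) = (fun u : T1 * T2 => (u.2, u.1)) (g, h) by [].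
  rewrite path_map (@eq_path _ _ (RR e1 e2)) // => u v /=; by rewrite swapRR.
- have -> : (h, g) = (fun u : T1 * T2 => (u.2, u.1)) (g, h) by [].
  by rewrite last_map Hl.
Qed.

Lemma dist_ge_swap (T1 T2 : finType) (e1 : rel T1) (e2 : rel T2) g h g' h' :
  dist_ge (RR e1 e2) (g, h) (g', h') 3 -> dist_ge (RR e2 e1) (h, g) (h', g') 3.
Proof.
move=> H n Hn W; apply: (H n Hn).
by move: (walk_swap W).
Qed.

End Gen.

Lemma half (T1 T2 : finType) (e1 : rel T1) (e2 : rel T2)
  (sG : simple_graph e1) (sH : simple_graph e2) g g' h h' :
  sn e1 g g' = true -> sn e2 h h' = false ->
  dist_ge (RR e1 e2) (g, h) (g', h') 3 ->
  (cnbhd e1 g = cnbhd e1 g' /\ dist_ge e2 h h' 3 /\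
       (cnbhd e1 g = setT \/ gamma_pair e2 h h')).
Proof.
case: sG => sy1 ir1; case: sH => sy2 ir2.
move=> s1 s2 /dist_ge3 [_ _ Hnc].
have hh : h != h' by apply/negP => /eqP E; move: s2; rewrite E sn_refl.
have Ceq : cnbhd e1 g = cnbhd e1 g'.
  apply/setP => x; rewrite !in_cnbhd.
  case Ex: (sn e1 g x); case Ex': (sn e1 g' x) => //.
  - exfalso; apply: (Hnc (x, h)).
    + apply: RI; last by rewrite Ex sn_refl.
      left; apply/negP => /eqP E; move: Ex'; rewrite -E (sn_sym sy1) s1.
      by [].
    + apply: RI; first by right.
      by rewrite (sn_sym sy1) Ex' s2.
  - exfalso; apply: (Hnc (x, h')).
    + apply: RI; first by right.
      by rewrite Ex s2.
    + apply: RI; last by rewrite (sn_sym sy1) Ex' sn_refl.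
      left; apply/negP => /eqP E; move: Ex; rewrite E s1.
      by [].
split=> //; split.
  apply/dist_ge3; split.
  - by move=> E; move: hh; rewrite E eqxx.
  - by move=> E; move: s2; rewrite /sn E orbT.
  - move=> z Hz Hz'; apply: (Hnc (g, z)).
    + apply: RI; last by rewrite sn_refl /sn Hz orbT.
      right; apply/negP => /eqP E; move: Hz; rewrite -E ir2.
      by [].
    + apply: RI; last by rewrite s1 /sn Hz' orbT.
      right; apply/negP => /eqP E; move: Hz'; rewrite E ir2.
      by [].
case: (classic (cnbhd e1 g = setT)) => HT; [by left | right].
have [x Hx] : exists x, x \notin cnbhd e1 g.
  apply: NNPP => Hn; apply: HT; apply/setP => x; rewrite in_setT.
  by case E: (x \in cnbhd e1 g) => //; exfalso; apply: Hn; exists x; rewrite E.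
move: (Hx); rewrite in_cnbhd => /negbTE Hxg.
have Hxg' : sn e1 g' x = false by move: Hx; rewrite Ceq in_cnbhd => /negbTE.
split=> //; split.
- apply/setP => y; rewrite in_setI !in_cnbhd in_set0.
  apply/negbTE/negP => /andP [Hy Hy']; apply: (Hnc (g, y)).
  + apply: RI; last by rewrite sn_refl Hy.
    right; apply/negP => /eqP E; move: Hy'; rewrite -E (sn_sym sy2) s2.
    by [].
  + apply: RI; last by rewrite s1 (sn_sym sy2) Hy'.
    right; apply/negP => /eqP E; move: Hy; rewrite E s2.
    by [].
- apply/setP => y; rewrite in_setU !in_cnbhd in_setT.
  case E: (sn e2 h y || sn e2 h' y) => //; exfalso.
  move: E => /negbT; rewrite negb_or => /andP [Hy Hy']; apply: (Hnc (x, y)).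
  + apply: RI; last by rewrite Hxg (negbTE Hy).
    left; apply/negP => /eqP E; move: Hxg; rewrite -E sn_refl.
    by [].
  + apply: RI; last by rewrite (sn_sym sy1) Hxg' (sn_sym sy2) (negbTE Hy').
    left; apply/negP => /eqP E; move: Hxg'; rewrite E sn_refl.
    by [].
Qed.

Lemma condA (T1 T2 : finType) (e1 : rel T1) (e2 : rel T2)
  (sG : simple_graph e1) (sH : simple_graph e2) g g' h h' :
  (cnbhd e1 g = cnbhd e1 g' /\ dist_ge e2 h h' 3 /\
       (cnbhd e1 g = setT \/ gamma_pair e2 h h')) ->
  dist_ge (RR e1 e2) (g, h) (g', h') 3.
Proof.
case: sG => sy1 ir1; case: sH => sy2 ir2.
move=> [Ceq [/dist_ge3 [hh nadj nc] Hor]].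
have s1 : sn e1 g g' by rewrite -in_cnbhd Ceq in_cnbhd sn_refl.
have s2 : sn e2 h h' = false.
  rewrite /sn; case: eqP => // _; by case: (e2 h h') nadj.
have Cx : forall x, sn e1 x g' = sn e1 g x.
  by move=> x; rewrite (sn_sym sy1) -!in_cnbhd Ceq.
apply/dist_ge3; split.
- by case=> _ E.
- by rewrite /RR /= s1 s2 andbF.
- move=> [x y] /andP [_ /eqP /= E1] /andP [_ /eqP /= E2].
  rewrite Cx E1 in E2.
  case Ey: (sn e2 h y); rewrite Ey in E1 E2.
  + move: Ey E2; rewrite /sn.
    case: (eqVneq h y) => [<-|hy] /= A.
      by move=> B; move: s2; rewrite /sn -B.
    move: A.
    case: (eqVneq y h') => [E|yh'] /= A B; first by subst y; apply: nadj.
    by apply: (nc y).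
  + case: Hor => [HT|[_ [_ HU]]].
    * by move: (in_setT x); rewrite -HT in_cnbhd E1.
    * move: (in_setT y); rewrite -HU in_setU !in_cnbhd Ey /=.
      by rewrite (sn_sym sy2) -E2.
Qed.

Lemma sn_neq (T : finType) (e : rel T) a b : sn e a b = false -> a != b.
Proof. by rewrite /sn; case: eqP. Qed.

Lemma sn_e (T : finType) (e : rel T) a b : e a b -> sn e a b.
Proof. by rewrite /sn => ->; rewrite orbT. Qed.

Lemma sn_ne (T : finType) (e : rel T) a b : a != b -> ~~ e a b -> sn e a b = false.
Proof. by rewrite /sn => /negbTE -> /negbTE ->. Qed.

Lemma wb (T1 T2 : finType) (e1 : rel T1) (e2 : rel T2)
  (sy1 : symmetric e1) (ir1 : irreflexive e1) g g' h h' x1 x2 :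
  (forall x, sn e1 g' x = sn e1 g x) -> sn e2 h h' = false ->
  sn e1 g x1 -> sn e1 g x2 = false -> e1 x1 x2 ->
  walk (RR e1 e2) (g, h) (g', h') 3.
Proof.
move=> Cx s2 H1 H2 E.
apply: (@walk3 _ _ _ (x1, h) (x2, h)).
- apply: RI; last by rewrite H1 sn_refl.
  left; apply/negP => /eqP A; subst x1; by rewrite (sn_e E) in H2.
- apply: RI; last by rewrite (sn_e E) sn_refl.
  by left; apply/negP => /eqP A; subst x1; rewrite ir1 in E.
- apply: RI; first by right; apply: sn_neq s2.
  by rewrite (sn_sym sy1) Cx H2 s2.
Qed.

Lemma wc (T1 T2 : finType) (e1 : rel T1) (e2 : rel T2)
  (sy1 : symmetric e1) (ir1 : irreflexive e1) g g' h h' a b :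
  (forall x, sn e1 g' x = sn e1 g x) -> sn e2 h h' = false ->
  sn e1 g a -> sn e1 g b -> a != b -> ~~ e1 a b ->
  walk (RR e1 e2) (g, h) (g', h') 3.
Proof.
move=> Cx s2 Ha Hb ab nab.
have ga : g != a.
  apply/negP => /eqP A; subst a; move: Hb; rewrite /sn (negbTE ab).
  by rewrite (negbTE nab).
have bg' : b != g'.
  apply/negP => /eqP A; subst b; move: Ha; rewrite -Cx /sn eq_sym (negbTE ab).
  by rewrite sy1 (negbTE nab).
apply: (@walk3 _ _ _ (a, h) (b, h')).
- by apply: RI; [left | rewrite Ha sn_refl].
- apply: RI; first by right; apply: sn_neq s2.
  by rewrite s2 sn_ne.
- by apply: RI; [left | rewrite (sn_sym sy1) Cx Hb sn_refl].
Qed.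

Lemma wd (T1 T2 : finType) (e1 : rel T1) (e2 : rel T2)
  (sy1 : symmetric e1) (sy2 : symmetric e2) g g' h h' a b :
  (forall x, sn e1 g' x = sn e1 g x) -> sn e2 h h' = false ->
  sn e1 g a = false -> sn e1 g b = false -> a != b -> ~~ e1 a b ->
  walk (RR e1 e2) (g, h) (g', h') 3.
Proof.
move=> Cx s2 Ha Hb ab nab.
have hh := sn_neq s2.
apply: (@walk3 _ _ _ (a, h') (b, h)).
- by apply: RI; [right | rewrite Ha s2].
- apply: RI; first by right; rewrite eq_sym.
  by rewrite (sn_sym sy2) s2 sn_ne.
- by apply: RI; [right | rewrite (sn_sym sy1) Cx Hb s2].
Qed.

Lemma wa (T1 T2 : finType) (e1 : rel T1) (e2 : rel T2)
  (sy2 : symmetric e2) (ir2 : irreflexive e2) g g' h h' y1 y2 :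
  sn e1 g g' ->
  (forall y, sn e2 h y -> sn e2 h' y = false) ->
  (forall y, sn e2 h y = false -> sn e2 h' y) ->
  sn e2 h y1 -> sn e2 h y2 = false -> e2 y1 y2 ->
  walk (RR e1 e2) (g, h) (g', h') 3.
Proof.
move=> s1 Dh Uh H1 H2 E.
apply: (@walk3 _ _ _ (g, y1) (g', y2)).
- apply: RI; last by rewrite H1 sn_refl.
  right; apply/negP => /eqP A; subst y1; by rewrite (sn_e E) in H2.
- apply: RI; last by rewrite (sn_e E) s1.
  by right; apply/negP => /eqP A; subst y1; rewrite ir2 in E.
- apply: RI; last by rewrite sn_refl (sn_sym sy2) Uh.
  right; apply/negP => /eqP A; subst y2.
  by move: (Dh _ H1); rewrite (sn_sym sy2) (sn_e E).
Qed.

Lemma we1 (T1 T2 : finType) (e1 : rel T1) (e2 : rel T2)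
  (sy1 : symmetric e1) (sy2 : symmetric e2) g g' h h' x0 y1 y2 :
  sn e1 g g' -> (forall x, sn e1 g' x = sn e1 g x) ->
  (forall y, sn e2 h y -> sn e2 h' y = false) ->
  sn e1 g x0 = false ->
  sn e2 h y1 -> sn e2 h y2 -> y1 != y2 -> ~~ e2 y1 y2 ->
  walk (RR e1 e2) (g, h) (g', h') 3.
Proof.
move=> s1 Cx Dh Hx H1 H2 ne nE.
apply: (@walk3 _ _ _ (g, y1) (x0, y2)).
- apply: RI; last by rewrite H1 sn_refl.
  right; apply/negP => /eqP A; subst y1; move: H2; rewrite /sn (negbTE ne).
  by rewrite (negbTE nE).
- by apply: RI; [left; apply: sn_neq Hx | rewrite Hx sn_ne].
- apply: RI; last by rewrite (sn_sym sy1) Cx Hx (sn_sym sy2) Dh.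
  left; apply/negP => /eqP A; subst x0; by rewrite s1 in Hx.
Qed.

Lemma we2 (T1 T2 : finType) (e1 : rel T1) (e2 : rel T2)
  (sy1 : symmetric e1) (sy2 : symmetric e2) g g' h h' x0 y1 y2 :
  (forall x, sn e1 g' x = sn e1 g x) ->
  (forall y, sn e2 h y = false -> sn e2 h' y) ->
  sn e1 g x0 = false ->
  sn e2 h y1 = false -> sn e2 h y2 = false -> y1 != y2 -> ~~ e2 y1 y2 ->
  walk (RR e1 e2) (g, h) (g', h') 3.
Proof.
move=> Cx Uh Hx H1 H2 ne nE.
apply: (@walk3 _ _ _ (x0, y1) (g', y2)).
- by apply: RI; [left; apply: sn_neq Hx | rewrite Hx H1].
- by apply: RI; [right | rewrite (sn_sym sy1) Cx Hx sn_ne].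
- apply: RI; last by rewrite sn_refl (sn_sym sy2) Uh.
  right; apply/negP => /eqP A; subst y2.
  move: (Uh _ H1); rewrite /sn eq_sym (negbTE ne) /= sy2.
  by rewrite (negbTE nE).
Qed.

Lemma condB (T1 T2 : finType) (e1 : rel T1) (e2 : rel T2)
  (sG : simple_graph e1) (sH : simple_graph e2)
  (ncG : ~ complete e1) (nb : ~ (two_cliques e1 /\ two_cliques e2)) g g' h h' :
  (cnbhd e1 g = cnbhd e1 g' /\ dist_ge e2 h h' 3 /\
       (cnbhd e1 g = setT \/ gamma_pair e2 h h')) ->
  walk (RR e1 e2) (g, h) (g', h') 3.
Proof.
case: sG => sy1 ir1; case: sH => sy2 ir2.
move=> [Ceq [/dist_ge3 [hh nadj nc] Hor]].
have s1 : sn e1 g g' by rewrite -in_cnbhd Ceq in_cnbhd sn_refl.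
have s2 : sn e2 h h' = false.
  rewrite /sn; case: eqP => // _; by case: (e2 h h') nadj.
have Cx : forall x, sn e1 g' x = sn e1 g x by move=> x; rewrite -!in_cnbhd Ceq.
case: (classic (forall x y : T1, x != y ->
   (e1 x y <-> ((x \in cnbhd e1 g) = (y \in cnbhd e1 g))))) => HG; last first.
  apply not_all_ex_not in HG; case: HG => x HG.
  apply not_all_ex_not in HG; case: HG => y HG.
  apply imply_to_and in HG; case: HG => xy Hiff.
  rewrite !in_cnbhd in Hiff.
  case Ex: (sn e1 g x); case Ey: (sn e1 g y); case Exy: (e1 x y);
    rewrite Ex Ey Exy in Hiff;
    try by exfalso; apply: Hiff; split => //; move=> A; rewrite A.
  - by apply: (wc sy1 ir1 Cx s2 Ex Ey xy); rewrite Exy.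
  - exact: (wb sy1 ir1 Cx s2 Ex Ey Exy).
  - by apply: (wb sy1 ir1 Cx s2 Ey Ex); rewrite sy1.
  - by apply: (wd sy1 sy2 Cx s2 Ex Ey xy); rewrite Exy.
case: (classic (cnbhd e1 g = setT)) => HT.
  exfalso; apply: ncG => x y xy; apply/(HG x y xy); by rewrite HT !in_setT.
have [x0 Hx0] : exists x, x \notin cnbhd e1 g.
  apply: NNPP => Hn; apply: HT; apply/setP => x; rewrite in_setT.
  by case E: (x \in cnbhd e1 g) => //; exfalso; apply: Hn; exists x; rewrite E.
have Hx : sn e1 g x0 = false by move: Hx0; rewrite in_cnbhd => /negbTE.
case: Hor => [//|[_ [HI HU]]].
have Dh : forall y, sn e2 h y -> sn e2 h' y = false.
  by move=> y Hy; move: (in_set0 y); rewrite -HI in_setI !in_cnbhd Hy.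
have Uh : forall y, sn e2 h y = false -> sn e2 h' y.
  by move=> y Hy; move: (in_setT y); rewrite -HU in_setU !in_cnbhd Hy.
case: (classic (forall x y : T2, x != y ->
   (e2 x y <-> ((x \in cnbhd e2 h) = (y \in cnbhd e2 h))))) => HH; last first.
  apply not_all_ex_not in HH; case: HH => x HH.
  apply not_all_ex_not in HH; case: HH => y HH.
  apply imply_to_and in HH; case: HH => xy Hiff.
  rewrite !in_cnbhd in Hiff.
  case Ex: (sn e2 h x); case Ey: (sn e2 h y); case Exy: (e2 x y);
    rewrite Ex Ey Exy in Hiff;
    try by exfalso; apply: Hiff; split => //; move=> A; rewrite A.
  - by apply: (we1 sy1 sy2 s1 Cx Dh Hx Ex Ey xy); rewrite Exy.
  - exact: (wa sy2 ir2 s1 Dh Uh Ex Ey Exy).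
  - by apply: (wa sy2 ir2 s1 Dh Uh Ey Ex); rewrite sy2.
  - by apply: (we2 sy1 sy2 Cx Uh Hx Ex Ey xy); rewrite Exy.
exfalso; apply: nb; split.
- exists (cnbhd e1 g); split; first by apply/set0Pn; exists g; rewrite in_cnbhd sn_refl.
  split=> //; apply/set0Pn; exists x0; by rewrite in_setC.
- exists (cnbhd e2 h); split; first by apply/set0Pn; exists h; rewrite in_cnbhd sn_refl.
  split=> //; apply/set0Pn; exists h'; by rewrite in_setC in_cnbhd s2.
Qed.

Lemma dist_ge_eqrel (T : finType) (e e' : rel T) x y k :
  e =2 e' -> dist_ge e x y k -> dist_ge e' x y k.
Proof.
move=> E H n Hn W; apply: (H n Hn); apply: (walk_eqrel _ W) => u v.
by rewrite E.
Qed.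

Theorem mainTheorem4 (T1 T2 : finType) (e1 : rel T1) (e2 : rel T2)
    (sG : simple_graph e1) (sH : simple_graph e2)
    (ncG : ~ complete e1) (ncH : ~ complete e2)
    (not_both : ~ (two_cliques e1 /\ two_cliques e2))
    (g g' : T1) (h h' : T2) :
  dist_eq (modprod e1 e2) (g, h) (g', h') 3 <->
  ( (cnbhd e1 g = cnbhd e1 g' /\ dist_ge e2 h h' 3 /\
       (cnbhd e1 g = setT \/ gamma_pair e2 h h'))
    \/
    (cnbhd e2 h = cnbhd e2 h' /\ dist_ge e1 g g' 3 /\
       (cnbhd e2 h = setT \/ gamma_pair e1 g g')) ).
Proof.
have E12 := modprodE sG sH.
have nb' : ~ (two_cliques e2 /\ two_cliques e1) by move=> [A B]; apply: not_both.
split.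
- move=> [_ Hge].
  have H' : dist_ge (RR e1 e2) (g, h) (g', h') 3 by apply: (dist_ge_eqrel E12).
  case s1: (sn e1 g g'); case s2: (sn e2 h h').
  + exfalso; move: H' => /dist_ge3 [A B _].
    case: (eqVneq (g, h) (g', h')) => [E|ne]; first by apply: A.
    by apply: B; rewrite /RR /= ne s1 s2.
  + by left; apply: half.
  + by right; apply: (half sH sG) => //; apply: dist_ge_swap.
  + exfalso; move: H' => /dist_ge3 [A B _].
    case: (eqVneq (g, h) (g', h')) => [E|ne]; first by apply: A.
    by apply: B; rewrite /RR /= ne s1 s2.
- have E' : RR e1 e2 =2 modprod e1 e2 by move=> u v; rewrite E12.
  case=> C; split.
  + by apply: (walk_eqrel E'); apply: condB.
  + by apply: (dist_ge_eqrel E'); apply: condA.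
  + apply: (walk_eqrel E'); move: (walk_swap (condB sH sG ncH nb' C)).
    by [].
  + apply: (dist_ge_eqrel E'); move: (dist_ge_swap (condA sH sG C)).
    by [].
Qed.
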